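(* Consider the system $$\frac{df}{dt}= r\alpha f m(1-f-m)-(1+h)f,\qquad \frac{dm}{dt}=(1-r)\alpha f m(1-f-m)+(s-1)m,$$ with $0<r<1$, $\alpha>0$, $h\ge 0$, $0\le s<1$, and let $\mu=\frac{(1-r)(1+h)}{r(1-s)}$. Let $E_i^*=(f_i^*,\mu f_i^* )$ be an interior equilibrium, where $f_i^*$ is a positive root of $rα\mu f(1-(1+\mu)f)=1+h$. If $$\frac{r(1-s)}{2\{1+h-r(h+s)\}}<f^*_i<\frac{r(1-s)}{1+h-r(h+s)},$$ then $E_i^*$ is locally asymptotically stable.
   Context: Nondimensionalized FHMS (female harvesting, male stocking) model without Allee effect; $f,m$ are scaled female and male densities, $r$ the primary sex ratio, $h$ the scaled harvesting rate, $s$ the scaled stocking rate. Interior equilibria are those with $f>0,m>0$; they satisfy $m=\mu f$. *)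

(* Defs.v *)
From Stdlib Require Import Reals.
From Coquelicot Require Import Coquelicot.
Open Scope R_scope.

Definition Ff (r alpha h s f m : R) : R :=
  r * alpha * f * m * (1 - f - m) - (1 + h) * f.
Definition Fm (r alpha h s f m : R) : R :=
  (1 - r) * alpha * f * m * (1 - f - m) + (s - 1) * m.

Definition mu (r h s : R) : R := ((1 - r) * (1 + h)) / (r * (1 - s)).

Definition dist2 (f m f0 m0 : R) : R := sqrt ((f - f0)^2 + (m - m0)^2).

Definition is_solution_on (r alpha h s : R) (T : Rbar) (f m : R -> R) : Prop :=
  (forall t, 0 < t -> Rbar_lt t T ->
     is_derive f t (Ff r alpha h s (f t) (m t)) /\
     is_derive m t (Fm r alpha h s (f t) (m t))) /\
  filterlim f (at_right 0) (locally (f 0)) /\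
  filterlim m (at_right 0) (locally (m 0)).

Definition locally_asymptotically_stable (r alpha h s fe me : R) : Prop :=
  (forall eps, 0 < eps -> exists delta, 0 < delta /\
     forall (T : Rbar) (f m : R -> R), Rbar_lt 0 T ->
       is_solution_on r alpha h s T f m ->
       dist2 (f 0) (m 0) fe me < delta ->
       forall t, 0 <= t -> Rbar_lt t T -> dist2 (f t) (m t) fe me < eps) /\
  (exists eta, 0 < eta /\
     forall f m : R -> R, is_solution_on r alpha h s p_infty f m ->
       dist2 (f 0) (m 0) fe me < eta ->
       is_lim f p_infty fe /\ is_lim m p_infty me).

(* Main.v *)
Require Import Defs.
From Stdlib Require Import Reals Lra Psatz Classical FunctionalExtensionality.
From Coquelicot Require Import Coquelicot.
Open Scope R_scope.

Lemma d_mult (f g : R -> R) t df dg : is_derive f t df -> is_derive g t dg ->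
  is_derive (fun x => f x * g x) t (df * g t + f t * dg).
Proof. intros H1 H2. exact (is_derive_mult f g t df dg H1 H2 Rmult_comm). Qed.
Lemma d_plus (f g : R -> R) t df dg : is_derive f t df -> is_derive g t dg ->
  is_derive (fun x => f x + g x) t (df + dg).
Proof. intros H1 H2. exact (is_derive_plus f g t df dg H1 H2). Qed.
Lemma d_minus (f g : R -> R) t df dg : is_derive f t df -> is_derive g t dg ->
  is_derive (fun x => f x - g x) t (df - dg).
Proof. intros H1 H2. exact (is_derive_minus f g t df dg H1 H2). Qed.
Lemma d_const (a t : R) : is_derive (fun _ => a) t 0.
Proof. exact (is_derive_const a t). Qed.
Lemma d_id (t : R) : is_derive (fun x => x) t 1.
Proof. exact (is_derive_id t). Qed.
Lemma d_eq (f : R -> R) t l l' : is_derive f t l -> l = l' -> is_derive f t l'.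
Proof. intros H ->; exact H. Qed.

Lemma cont_eps (W : R -> R) t d : is_derive W t d ->
  forall eps, 0 < eps -> exists dd, 0 < dd /\ forall u, Rabs (u - t) < dd -> Rabs (W u - W t) < eps.
Proof.
  intros H eps Heps.
  assert (C : continuous W t).
  { apply (ex_derive_continuous (K:=R_AbsRing) (V:=R_NormedModule)). exists d; exact H. }
  apply filterlim_locally with (eps := mkposreal eps Heps) in C.
  destruct C as [dd Hdd]. exists dd; split; [apply cond_pos|].
  intros u Hu. apply (Hdd u). exact Hu.
Qed.

Lemma rcont_eps (W : R -> R) : filterlim W (at_right 0) (locally (W 0)) ->
  forall eps, 0 < eps -> exists dd, 0 < dd /\ forall u, 0 < u < dd -> Rabs (W u - W 0) < eps.
Proof.
  intros H eps Heps.
  apply filterlim_locally with (eps := mkposreal eps Heps) in H.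
  destruct H as [dd Hdd]. exists dd; split; [apply cond_pos|].
  intros u Hu. apply (Hdd u); [|lra].
  change (Rabs (u - 0) < dd). rewrite Rminus_0_r, Rabs_pos_eq; lra.
Qed.

Lemma mono_lemma (W D : R -> R) (T : Rbar) :
  (forall t, 0 < t -> Rbar_lt t T -> is_derive W t (D t)) ->
  (forall t, 0 < t -> Rbar_lt t T -> D t <= 0) ->
  filterlim W (at_right 0) (locally (W 0)) ->
  forall t, 0 <= t -> Rbar_lt t T -> W t <= W 0.
Proof.
  intros Hd Hneg Hc t Ht0 HtT.
  destruct (Req_dec t 0) as [->|Htn]; [lra|].
  assert (Hmono : forall a, 0 < a < t -> W t <= W a).
  { intros a Ha.
    assert (HT : forall x, a <= x <= t -> Rbar_lt x T).
    { intros x Hx. apply Rbar_le_lt_trans with t; [simpl; lra|exact HtT]. }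
    destruct (MVT_gen W a t D) as [c [Hc1 Hc2]].
    - intros x Hx. rewrite Rmin_left in Hx by lra. rewrite Rmax_right in Hx by lra.
      apply Hd; [lra|apply HT; lra].
    - intros x Hx. rewrite Rmin_left in Hx by lra. rewrite Rmax_right in Hx by lra.
      apply continuity_pt_filterlim.
      apply (ex_derive_continuous (K:=R_AbsRing) (V:=R_NormedModule)).
      exists (D x). apply Hd; [lra|apply HT; lra].
    - rewrite Rmin_left in Hc1 by lra. rewrite Rmax_right in Hc1 by lra.
      assert (D c <= 0) by (apply Hneg; [lra|apply HT; lra]).
      assert (D c * (t - a) <= 0) by (apply Rmult_le_0_r; lra).
      lra. }
  destruct (Rle_dec (W t) (W 0)) as [Hle|Hgt]; [exact Hle|].
  destruct (rcont_eps W Hc (W t - W 0)) as [dd [Hdd Hu]]; [lra|].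
  set (a := Rmin dd t / 2).
  assert (Ha : 0 < a < Rmin dd t).
  { unfold a. assert (0 < Rmin dd t) by (apply Rmin_glb_lt; lra). lra. }
  assert (a < dd) by (pose proof (Rmin_l dd t); lra).
  assert (a < t) by (pose proof (Rmin_r dd t); lra).
  specialize (Hu a ltac:(lra)). specialize (Hmono a ltac:(lra)).
  apply Rabs_def2 in Hu. lra.
Qed.

Lemma barrier (V D : R -> R) (T : Rbar) (K : R) :
  (forall t, 0 < t -> Rbar_lt t T -> is_derive V t (D t)) ->
  (forall t, 0 < t -> Rbar_lt t T -> V t < K -> D t <= 0) ->
  filterlim V (at_right 0) (locally (V 0)) ->
  V 0 < K ->
  forall t, 0 <= t -> Rbar_lt t T -> V t <= V 0.
Proof.
  intros Hd Hneg Hc HK.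
  assert (Key : forall t, 0 <= t -> Rbar_lt t T -> V t < K).
  { intros t1 Ht1 Ht1T.
    destruct (Rlt_le_dec (V t1) K) as [ok|Hbad]; [exact ok|exfalso].
    set (E := fun t => 0 <= t <= t1 /\ forall u, 0 <= u <= t -> V u < K).
    assert (E0 : E 0).
    { split; [lra|]. intros u Hu. replace u with 0 by lra. exact HK. }
    destruct (completeness E) as [sg [Hub Hlub]].
    { exists t1. intros x Hx. apply Hx. }
    { exists 0; exact E0. }
    assert (Hs0 : 0 <= sg) by (apply Hub; exact E0).
    assert (Hs1 : sg <= t1) by (apply Hlub; intros x Hx; apply Hx).
    assert (HsT : forall x, x <= t1 -> Rbar_lt x T).
    { intros x Hx. apply Rbar_le_lt_trans with t1; [simpl; lra|exact Ht1T]. }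
    assert (Ha : forall u, 0 <= u < sg -> V u < K).
    { intros u Hu. destruct (Rlt_le_dec (V u) K) as [ok|bad]; [exact ok|].
      assert (sg <= u); [|lra].
      apply Hlub. intros x Hx.
      destruct (Rle_lt_dec x u) as [l|l]; [exact l|].
      exfalso. destruct Hx as [_ Hx]. specialize (Hx u ltac:(lra)). lra. }
    assert (Hb : forall u, 0 <= u < sg -> V u <= V 0).
    { intros u Hu.
      apply (mono_lemma V D (Finite sg)); try (simpl; lra).
      - intros t Ht HtT. simpl in HtT. apply Hd; [lra|apply HsT; lra].
      - intros t Ht HtT. simpl in HtT. apply Hneg; [lra|apply HsT; lra|apply Ha; lra].
      - exact Hc. }
    assert (Hcont : sg = 0 \/ (0 < sg /\ exists d, is_derive V sg d)).
    { destruct (Req_dec sg 0); [left; auto|right; split; [lra|]].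
      exists (D sg). apply Hd; [lra|apply HsT; lra]. }
    assert (Hc' : V sg < K).
    { destruct Hcont as [->|[Hsp [d Hdv]]]; [exact HK|].
      destruct (Rle_dec (V sg) (V 0)) as [l|l]; [lra|exfalso].
      destruct (cont_eps V sg d Hdv (V sg - V 0)) as [dd [Hdd Hu]]; [lra|].
      set (u := Rmax (sg - dd/2) (sg/2)).
      assert (sg - dd/2 <= u) by apply Rmax_l.
      assert (sg/2 <= u) by apply Rmax_r.
      assert (u < sg) by (unfold u; apply Rmax_lub_lt; lra).
      specialize (Hu u ltac:(rewrite Rabs_left by lra; lra)).
      specialize (Hb u ltac:(lra)). apply Rabs_def2 in Hu. lra. }
    assert (Hd' : exists d, 0 < d /\ forall u, sg <= u < sg + d -> V u < K).
    { destruct Hcont as [Hz|[Hsp [d Hdv]]].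
      - destruct (rcont_eps V Hc (K - V 0)) as [dd [Hdd Hu]]; [lra|].
        exists dd; split; [lra|]. intros u Hu'.
        destruct (Req_dec u 0) as [->|Hn]; [exact HK|].
        specialize (Hu u ltac:(lra)). apply Rabs_def2 in Hu. lra.
      - destruct (cont_eps V sg d Hdv (K - V sg)) as [dd [Hdd Hu]]; [lra|].
        exists dd; split; [lra|]. intros u Hu'.
        specialize (Hu u ltac:(rewrite Rabs_pos_eq by lra; lra)).
        apply Rabs_def2 in Hu. lra. }
    destruct Hd' as [d [Hdp Hdu]].
    assert (Hne : sg < t1).
    { destruct (Req_dec sg t1) as [e|]; [|lra]. rewrite e in Hc'. lra. }
    set (t' := Rmin (sg + d/2) t1).
    assert (sg < t') by (apply Rmin_glb_lt; lra).
    assert (t' <= sg + d/2) by apply Rmin_l.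
    assert (t' <= t1) by apply Rmin_r.
    assert (E t').
    { split; [lra|]. intros u Hu.
      destruct (Rlt_le_dec u sg); [apply Ha; lra|apply Hdu; lra]. }
    assert (t' <= sg) by (apply Hub; auto). lra. }
  apply (mono_lemma V D T Hd); [|exact Hc].
  intros t Ht HtT. apply Hneg; auto. apply Key; auto; lra.
Qed.

Definition Dl j11 j12 j21 j22 := j11*j22 - j12*j21.
Definition Vq j11 j12 j21 j22 x y :=
  Dl j11 j12 j21 j22*(x*x+y*y) + (j22*x - j12*y)*(j22*x - j12*y) + (-j21*x + j11*y)*(-j21*x + j11*y).
Definition Vd j11 j12 j21 j22 x y F1 F2 :=
  2*(Dl j11 j12 j21 j22*x + j22*(j22*x - j12*y) - j21*(-j21*x + j11*y))*F1
 + 2*(Dl j11 j12 j21 j22*y - j12*(j22*x - j12*y) + j11*(-j21*x + j11*y))*F2.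
Definition cc1 j11 j12 j21 j22 r := (Dl j11 j12 j21 j22 + j22*j22 + j21*j21)*r + (-j12*j22 - j11*j21)*(1-r).
Definition cc2 j11 j12 j21 j22 r := (-j22*j12 - j21*j11)*r + (Dl j11 j12 j21 j22 + j12*j12 + j11*j11)*(1-r).
Definition HH L fe me x y := x*y*L - (fe*y + me*x)*(x+y) - x*y*(x+y).

Lemma Vd_id j11 j12 j21 j22 r a Hv x y F1 F2 :
  F1 = j11*x + j12*y + r*a*Hv -> F2 = j21*x + j22*y + (1-r)*a*Hv ->
  Vd j11 j12 j21 j22 x y F1 F2 = 2*(j11+j22)*Dl j11 j12 j21 j22*(x*x+y*y)
     + 2*a*Hv*(cc1 j11 j12 j21 j22 r*x + cc2 j11 j12 j21 j22 r*y).
Proof. intros -> ->. unfold Vd, cc1, cc2, Dl. ring. Qed.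

Lemma Vq_lower j11 j12 j21 j22 x y : Dl j11 j12 j21 j22*(x*x+y*y) <= Vq j11 j12 j21 j22 x y.
Proof. unfold Vq.
  pose proof (Rle_0_sqr (j22*x - j12*y)). pose proof (Rle_0_sqr (-j21*x + j11*y)).
  unfold Rsqr in *. lra. Qed.

Lemma Vq_upper j11 j12 j21 j22 x y :
  Vq j11 j12 j21 j22 x y <= (Dl j11 j12 j21 j22 + 2*(j22*j22+j12*j12) + 2*(j21*j21+j11*j11))*(x*x+y*y).
Proof.
  unfold Vq.
  assert (forall a b, (a*x+b*y)*(a*x+b*y) <= 2*(a*a+b*b)*(x*x+y*y)).
  { intros a b. nra. }
  pose proof (H j22 (-j12)). pose proof (H (-j21) j11).
  replace (j22*x - j12*y) with (j22*x + -j12*y) by ring. nra.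
Qed.

Lemma HH_bound L fe me x y : 0 <= fe -> 0 <= me -> Rabs x <= 1 -> Rabs y <= 1 ->
  Rabs (HH L fe me x y) <= (Rabs L + 2*(fe+me) + 1)*(x*x+y*y).
Proof.
  intros Hf Hm Hx Hy. unfold HH.
  pose proof (Rabs_pos x) as X0. pose proof (Rabs_pos y) as Y0. pose proof (Rabs_pos L) as L0.
  assert (EX : x*x = Rabs x*Rabs x) by (rewrite <- Rabs_mult; rewrite Rabs_pos_eq; nra).
  assert (EY : y*y = Rabs y*Rabs y) by (rewrite <- Rabs_mult; rewrite Rabs_pos_eq; nra).
  assert (T1 : Rabs (x*y*L) = Rabs x*Rabs y*Rabs L) by (rewrite !Rabs_mult; ring).
  assert (T2 : Rabs ((fe*y + me*x)*(x+y)) <= (fe*Rabs y + me*Rabs x)*(Rabs x + Rabs y)).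
  { rewrite Rabs_mult. apply Rmult_le_compat; try apply Rabs_pos.
    - eapply Rle_trans; [apply Rabs_triang|]. rewrite !Rabs_mult, (Rabs_pos_eq fe), (Rabs_pos_eq me) by lra. lra.
    - apply Rabs_triang. }
  assert (T3 : Rabs (x*y*(x+y)) <= Rabs x*Rabs y*(Rabs x + Rabs y)).
  { rewrite !Rabs_mult. apply Rmult_le_compat_l; [nra|apply Rabs_triang]. }
  eapply Rle_trans.
  { unfold Rminus. eapply Rle_trans; [apply Rabs_triang|].
    apply Rplus_le_compat; [eapply Rle_trans; [apply Rabs_triang|]; apply Rplus_le_compat_l|].
    - rewrite Rabs_Ropp. apply T2.
    - rewrite Rabs_Ropp. apply T3. }
  rewrite T1, EX, EY.
  set (X := Rabs x) in *. set (Y := Rabs y) in *.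
  assert (X*Y <= X*X + Y*Y) by nra.
  assert (X*Y*(X+Y) <= X*X+Y*Y) by nra.
  assert ((fe*Y + me*X)*(X+Y) <= 2*(fe+me)*(X*X+Y*Y)) by nra.
  nra.
Qed.

Lemma key_bound j11 j12 j21 j22 r a L fe me x y F1 F2 rho :
  0 < a -> 0 <= fe -> 0 <= me -> 0 < rho <= 1 -> Rabs x <= rho -> Rabs y <= rho ->
  F1 = j11*x + j12*y + r*a*HH L fe me x y ->
  F2 = j21*x + j22*y + (1-r)*a*HH L fe me x y ->
  2*a*(Rabs L + 2*(fe+me) + 1)*(Rabs (cc1 j11 j12 j21 j22 r) + Rabs (cc2 j11 j12 j21 j22 r))*rho
     <= -((j11+j22)*Dl j11 j12 j21 j22) ->
  Vd j11 j12 j21 j22 x y F1 F2 <= (j11+j22)*Dl j11 j12 j21 j22*(x*x+y*y).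
Proof.
  intros Ha Hf Hm Hr Hx Hy E1 E2 Hc.
  rewrite (Vd_id _ _ _ _ _ _ _ _ _ _ _ E1 E2).
  set (Hv := HH L fe me x y).
  set (M := Rabs L + 2*(fe+me) + 1).
  set (c1 := cc1 j11 j12 j21 j22 r). set (c2 := cc2 j11 j12 j21 j22 r).
  set (S := x*x+y*y).
  assert (HS : 0 <= S) by (unfold S; nra).
  assert (HHb : Rabs Hv <= M*S) by (apply HH_bound; lra).
  assert (Hl : Rabs (c1*x + c2*y) <= (Rabs c1 + Rabs c2)*rho).
  { eapply Rle_trans; [apply Rabs_triang|]. rewrite !Rabs_mult.
    pose proof (Rabs_pos c1). pose proof (Rabs_pos c2). nra. }
  assert (Hp : Hv*(c1*x+c2*y) <= Rabs Hv * Rabs (c1*x+c2*y)).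
  { rewrite <- Rabs_mult. apply Rle_abs. }
  assert (Rabs Hv * Rabs (c1*x+c2*y) <= M*S*((Rabs c1 + Rabs c2)*rho)).
  { apply Rmult_le_compat; try apply Rabs_pos; assumption. }
  assert (2*a*(Hv*(c1*x+c2*y)) <= 2*a*(M*S*((Rabs c1 + Rabs c2)*rho))) by
    (apply Rmult_le_compat_l; lra).
  assert (2*a*(M*S*((Rabs c1 + Rabs c2)*rho)) = (2*a*M*(Rabs c1 + Rabs c2)*rho)*S) by ring.
  assert ((2*a*M*(Rabs c1 + Rabs c2)*rho)*S <= -((j11+j22)*Dl j11 j12 j21 j22)*S)
    by (apply Rmult_le_compat_r; assumption).
  nra.
Qed.
Require Import Defs.
Definition LL fe me := 1 - fe - me.
Definition K11 r a h fe me := r*a*(me*LL fe me - fe*me) - (1+h).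
Definition K12 r a fe me := r*a*(fe*LL fe me - fe*me).
Definition K21 r a fe me := (1-r)*a*(me*LL fe me - fe*me).
Definition K22 r a s fe me := (1-r)*a*(fe*LL fe me - fe*me) - (1-s).

Lemma lin_Ff r a h s fe me x y :
  Ff r a h s (fe+x) (me+y) = Ff r a h s fe me +
   (K11 r a h fe me*x + K12 r a fe me*y + r*a*HH (LL fe me) fe me x y).
Proof. unfold Ff, K11, K12, HH, LL. ring. Qed.
Lemma lin_Fm r a h s fe me x y :
  Fm r a h s (fe+x) (me+y) = Fm r a h s fe me +
   (K21 r a fe me*x + K22 r a s fe me*y + (1-r)*a*HH (LL fe me) fe me x y).
Proof. unfold Fm, K21, K22, HH, LL. ring. Qed.

Lemma equil_facts r alpha h s fs :
  0 < r < 1 -> 0 < alpha -> 0 <= h -> 0 <= s < 1 ->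
  0 < fs ->
  r * alpha * mu r h s * fs * (1 - (1 + mu r h s) * fs) = 1 + h ->
  r * (1 - s) / (2 * (1 + h - r * (h + s))) < fs ->
  let me := mu r h s * fs in
  0 < me /\ Ff r alpha h s fs me = 0 /\ Fm r alpha h s fs me = 0 /\
  K11 r alpha h fs me + K22 r alpha s fs me < 0 /\
  0 < Dl (K11 r alpha h fs me) (K12 r alpha fs me) (K21 r alpha fs me) (K22 r alpha s fs me).
Proof.
  intros Hr Ha Hh Hs Hf E Hlow me.
  set (m := mu r h s) in *.
  assert (Hm : m * (r*(1-s)) = (1-r)*(1+h)).
  { unfold m, mu. field. split; lra. }
  assert (Hmp : 0 < m).
  { unfold m, mu. apply Rdiv_lt_0_compat; apply Rmult_lt_0_compat; lra. }
  clearbody m.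
  assert (Hme : 0 < me) by (unfold me; nra).
  set (L := LL fs me).
  assert (HL : L = 1 - (1+m)*fs) by (unfold L, LL, me; ring).
  assert (E' : r*alpha*m*fs*L = 1+h) by (rewrite HL; exact E).
  assert (HLp : 0 < L).
  { assert (0 < r*alpha*m*fs) by (repeat apply Rmult_lt_0_compat; lra).
    destruct (Rle_lt_dec L 0); [|lra]. assert (r*alpha*m*fs*L <= 0) by nra. lra. }
  assert (E2 : (1-r)*alpha*fs*L = 1-s).
  { apply Rmult_eq_reg_l with (r*m); [|nra].
    transitivity ((1-r)*(r*alpha*m*fs*L)); [ring|]. rewrite E'. nra. }
  assert (D0 : 0 < 1 + h - r*(h+s)) by nra.
  assert (Hlow' : r*(1-s) < 2*(1+h - r*(h+s))*fs).
  { apply Rmult_lt_compat_l with (r := 2*(1+h-r*(h+s))) in Hlow; [|lra].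
    field_simplify in Hlow; lra. }
  assert (H1m : (1+m)*(r*(1-s)) = 1+h - r*(h+s)) by nra.
  assert (Hkey : 0 < 2*(1+m)*fs - 1).
  { apply Rmult_lt_reg_r with (r*(1-s)); [nra|]. nra. }
  assert (J11e : K11 r alpha h fs me = - r*alpha*m*fs*fs).
  { unfold K11. fold L. unfold me. rewrite <- E'. ring. }
  assert (J22e : K22 r alpha s fs me = -(1-r)*alpha*m*fs*fs).
  { unfold K22. fold L. unfold me. rewrite <- E2. ring. }
  assert (J12e : K12 r alpha fs me = r*alpha*fs*(L - m*fs)).
  { unfold K12. fold L. unfold me. ring. }
  assert (J21e : K21 r alpha fs me = (1-r)*alpha*m*fs*(L - fs)).
  { unfold K21. fold L. unfold me. ring. }
  split; [exact Hme|]. split.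
  { unfold Ff. replace (1 - fs - me) with L by (unfold L, LL; ring). unfold me. rewrite <- E'. ring. }
  split.
  { unfold Fm. replace (1 - fs - me) with L by (unfold L, LL; ring). unfold me.
    replace (s-1) with (-(1-s)) by ring. rewrite <- E2. ring. }
  split.
  { rewrite J11e, J22e. assert (0 < alpha*m*fs*fs) by (repeat apply Rmult_lt_0_compat; lra). nra. }
  unfold Dl. rewrite J11e, J22e, J12e, J21e.
  replace (- r * alpha * m * fs * fs * (- (1 - r) * alpha * m * fs * fs) -
    r * alpha * fs * (L - m * fs) * ((1 - r) * alpha * m * fs * (L - fs)))
   with (r*(1-r)*(alpha*alpha)*m*(fs*fs)*L*((1+m)*fs - L)) by ring.
  replace ((1+m)*fs - L) with (2*(1+m)*fs - 1) by (rewrite HL; ring).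
  repeat apply Rmult_lt_0_compat; nra.
Qed.

Definition RC (g : R -> R) := filterlim g (at_right 0) (locally (g 0)).
Lemma rc_plus g1 g2 : RC g1 -> RC g2 -> RC (fun t => g1 t + g2 t).
Proof. intros H1 H2. exact (filterlim_comp_2 g1 g2 Rplus H1 H2 (@filterlim_plus R_AbsRing R_NormedModule (g1 0) (g2 0))). Qed.
Lemma rc_mult g1 g2 : RC g1 -> RC g2 -> RC (fun t => g1 t * g2 t).
Proof. intros H1 H2. exact (filterlim_comp_2 g1 g2 Rmult H1 H2 (@filterlim_mult R_AbsRing (g1 0) (g2 0))). Qed.
Lemma rc_const a : RC (fun _ => a).
Proof. unfold RC. apply filterlim_const. Qed.
Lemma rc_opp g : RC g -> RC (fun t => - g t).
Proof. intros H. replace (fun t => - g t) with (fun t => (-1) * g t).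
  - apply rc_mult; [apply rc_const|exact H].
  - apply functional_extensionality; intros; ring. Qed.
Lemma rc_minus g1 g2 : RC g1 -> RC g2 -> RC (fun t => g1 t - g2 t).
Proof. intros H1 H2. apply (rc_plus g1 (fun t => - g2 t) H1). apply rc_opp, H2. Qed.
Lemma rc_id : RC (fun t => t).
Proof. unfold RC. intros P [eps H]. exists eps. intros y Hy _. apply H. exact Hy. Qed.

Lemma rc_Vq (x y : R -> R) j11 j12 j21 j22 : RC x -> RC y ->
  RC (fun t => Vq j11 j12 j21 j22 (x t) (y t)).
Proof.
  intros Hx Hy. unfold Vq.
  pose proof (rc_minus _ _ (rc_mult _ _ (rc_const j22) Hx) (rc_mult _ _ (rc_const j12) Hy)) as HB1.
  pose proof (rc_plus _ _ (rc_mult _ _ (rc_const (-j21)) Hx) (rc_mult _ _ (rc_const j11) Hy)) as HB2.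
  exact (rc_plus _ _ (rc_plus _ _ (rc_mult _ _ (rc_const (Dl j11 j12 j21 j22))
     (rc_plus _ _ (rc_mult _ _ Hx Hx) (rc_mult _ _ Hy Hy))) (rc_mult _ _ HB1 HB1)) (rc_mult _ _ HB2 HB2)).
Qed.

Lemma sol_rc (f m : R -> R) a b j11 j12 j21 j22 : RC f -> RC m ->
  RC (fun t => Vq j11 j12 j21 j22 (f t - a) (m t - b)).
Proof.
  intros Hf Hm.
  exact (rc_Vq (fun t => f t - a) (fun t => m t - b) j11 j12 j21 j22
    (rc_minus _ _ Hf (rc_const a)) (rc_minus _ _ Hm (rc_const b))).
Qed.

Lemma d_Vq (x y : R -> R) t dx dy j11 j12 j21 j22 :
  is_derive x t dx -> is_derive y t dy ->
  is_derive (fun t => Vq j11 j12 j21 j22 (x t) (y t)) t (Vd j11 j12 j21 j22 (x t) (y t) dx dy).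
Proof.
  intros Hx Hy. unfold Vq.
  pose proof (d_minus _ _ _ _ _ (d_mult _ _ _ _ _ (d_const j22 t) Hx) (d_mult _ _ _ _ _ (d_const j12 t) Hy)) as HB1.
  pose proof (d_plus _ _ _ _ _ (d_mult _ _ _ _ _ (d_const (-j21) t) Hx) (d_mult _ _ _ _ _ (d_const j11 t) Hy)) as HB2.
  pose proof (d_plus _ _ _ _ _ (d_plus _ _ _ _ _ (d_mult _ _ _ _ _ (d_const (Dl j11 j12 j21 j22) t)
     (d_plus _ _ _ _ _ (d_mult _ _ _ _ _ Hx Hx) (d_mult _ _ _ _ _ Hy Hy))) (d_mult _ _ _ _ _ HB1 HB1)) (d_mult _ _ _ _ _ HB2 HB2)) as HV.
  apply (d_eq _ _ _ _ HV). unfold Vd; match goal with |- ?a = ?b => change (@eq R a b) end; ring.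
Qed.

Lemma sol_deriv (F G : R -> R -> R) (f m : R -> R) t a b j11 j12 j21 j22 :
  is_derive f t (F (f t) (m t)) -> is_derive m t (G (f t) (m t)) ->
  is_derive (fun t => Vq j11 j12 j21 j22 (f t - a) (m t - b)) t
    (Vd j11 j12 j21 j22 (f t - a) (m t - b) (F (f t) (m t)) (G (f t) (m t))).
Proof.
  intros Hf Hm.
  pose proof (d_Vq (fun t => f t - a) (fun t => m t - b) t _ _ j11 j12 j21 j22
    (d_minus _ _ _ _ _ Hf (d_const a t)) (d_minus _ _ _ _ _ Hm (d_const b t))) as H.
  apply (d_eq _ _ _ _ H). rewrite !Rminus_0_r. reflexivity.
Qed.

Lemma sumsq_nn x y : 0 <= x*x + y*y.
Proof. pose proof (Rle_0_sqr x). pose proof (Rle_0_sqr y). unfold Rsqr in *. lra. Qed.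

Lemma abs_lt_of_sq (x rho : R) : 0 < rho -> x*x < rho*rho -> Rabs x < rho.
Proof.
  intros Hr H. destruct (Rle_lt_dec rho (Rabs x)) as [l|l]; [|exact l].
  assert (Rabs x * Rabs x = x*x) by (rewrite <- Rabs_mult; apply Rabs_pos_eq; nra).
  nra.
Qed.

Lemma sqrt_lt_sq (S d : R) : 0 <= S -> sqrt S < d -> S < d*d.
Proof.
  intros HS H. pose proof (sqrt_pos S). pose proof (sqrt_sqrt S HS). nra.
Qed.

Lemma sq_lt_sqrt (S d : R) : 0 <= S -> 0 < d -> S < d*d -> sqrt S < d.
Proof.
  intros HS Hd H. rewrite <- (sqrt_square d) by lra. apply sqrt_lt_1_alt. lra.
Qed.

Theorem mainTheorem2 (r alpha h s fs : R) :
  0 < r < 1 -> 0 < alpha -> 0 <= h -> 0 <= s < 1 ->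
  0 < fs ->
  r * alpha * mu r h s * fs * (1 - (1 + mu r h s) * fs) = 1 + h ->
  r * (1 - s) / (2 * (1 + h - r * (h + s))) < fs ->
  fs < r * (1 - s) / (1 + h - r * (h + s)) ->
  locally_asymptotically_stable r alpha h s fs (mu r h s * fs).
Proof.
  intros Hr Ha Hh Hs Hf E Hlow Hup.
  destruct (equil_facts r alpha h s fs Hr Ha Hh Hs Hf E Hlow) as [Hme [HF1 [HF2 [Htau HD]]]].
  set (me := mu r h s * fs) in *.
  set (j11 := K11 r alpha h fs me) in *.
  set (j12 := K12 r alpha fs me) in *.
  set (j21 := K21 r alpha fs me) in *.
  set (j22 := K22 r alpha s fs me) in *.
  set (Dv := Dl j11 j12 j21 j22) in *.
  set (c0 := -((j11+j22)*Dv)).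
  assert (Hc0 : 0 < c0) by (unfold c0; nra).
  set (M := Rabs (LL fs me) + 2*(fs+me) + 1).
  set (A := Rabs (cc1 j11 j12 j21 j22 r) + Rabs (cc2 j11 j12 j21 j22 r)).
  assert (HM : 0 < M) by (unfold M; pose proof (Rabs_pos (LL fs me)); lra).
  assert (HA : 0 <= A) by (unfold A; pose proof (Rabs_pos (cc1 j11 j12 j21 j22 r)); pose proof (Rabs_pos (cc2 j11 j12 j21 j22 r)); lra).
  set (rho := Rmin 1 (c0/(2*alpha*M*A+1))).
  assert (HMA : 0 <= 2*alpha*M*A) by (apply Rmult_le_pos; [|lra]; apply Rmult_le_pos; lra).
  assert (Hq : 0 < c0/(2*alpha*M*A+1)) by (apply Rdiv_lt_0_compat; lra).
  assert (Hrho : 0 < rho <= 1).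
  { split; [apply Rmin_glb_lt; lra|apply Rmin_l]. }
  assert (Hrho2 : 2*alpha*M*A*rho <= c0).
  { assert (rho <= c0/(2*alpha*M*A+1)) by apply Rmin_r.
    assert (rho*(2*alpha*M*A+1) <= c0).
    { apply Rmult_le_compat_r with (r := 2*alpha*M*A+1) in H; [|lra].
      field_simplify in H; lra. }
    nra. }
  assert (PW : forall u v, Vq j11 j12 j21 j22 (u - fs) (v - me) < Dv*rho*rho ->
     Vd j11 j12 j21 j22 (u - fs) (v - me) (Ff r alpha h s u v) (Fm r alpha h s u v)
       <= -c0 * ((u-fs)*(u-fs) + (v-me)*(v-me))).
  { intros u v HV.
    set (x := u - fs). set (y := v - me). fold x y in HV.
    pose proof (Vq_lower j11 j12 j21 j22 x y) as Hlo. fold Dv in Hlo.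
    assert (HS : x*x+y*y < rho*rho).
    { apply Rmult_lt_reg_l with Dv; [exact HD|]. nra. }
    assert (Hx : Rabs x <= rho) by (apply Rlt_le, abs_lt_of_sq; nra).
    assert (Hy : Rabs y <= rho) by (apply Rlt_le, abs_lt_of_sq; nra).
    assert (E1 : Ff r alpha h s u v = j11*x + j12*y + r*alpha*HH (LL fs me) fs me x y).
    { pose proof (lin_Ff r alpha h s fs me (u-fs) (v-me)) as HL.
      replace (fs + (u - fs)) with u in HL by ring. replace (me + (v - me)) with v in HL by ring.
      rewrite HL, HF1. unfold x, y, j11, j12. ring. }
    assert (E2 : Fm r alpha h s u v = j21*x + j22*y + (1-r)*alpha*HH (LL fs me) fs me x y).
    { pose proof (lin_Fm r alpha h s fs me (u-fs) (v-me)) as HL.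
      replace (fs + (u - fs)) with u in HL by ring. replace (me + (v - me)) with v in HL by ring.
      rewrite HL, HF2. unfold x, y, j21, j22. ring. }
    pose proof (key_bound j11 j12 j21 j22 r alpha (LL fs me) fs me x y _ _ rho
      Ha (Rlt_le _ _ Hf) (Rlt_le _ _ Hme) Hrho Hx Hy E1 E2) as KB.
    fold Dv in KB. unfold c0.
    assert (Hr' : 2 * alpha * (Rabs (LL fs me) + 2 * (fs + me) + 1) *
       (Rabs (cc1 j11 j12 j21 j22 r) + Rabs (cc2 j11 j12 j21 j22 r)) * rho <= - ((j11 + j22) * Dv))
      by exact Hrho2.
    specialize (KB Hr'). lra. }
  set (Cv := Dv + 2*(j22*j22+j12*j12) + 2*(j21*j21+j11*j11)).
  assert (HCv : Dv <= Cv) by (unfold Cv; nra).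
  assert (HVup : forall x y, Vq j11 j12 j21 j22 x y <= Cv*(x*x+y*y)) by (intros; apply Vq_upper).
  assert (HVlo : forall x y, Dv*(x*x+y*y) <= Vq j11 j12 j21 j22 x y)
    by (intros; apply Vq_lower).
  assert (Hdist : forall a b, dist2 a b fs me = sqrt ((a-fs)*(a-fs) + (b-me)*(b-me))).
  { intros a b. unfold dist2. f_equal. ring. }
  assert (INIT : forall m0 a b, 0 < m0 -> dist2 a b fs me < (Dv/Cv)*m0/2 ->
     Vq j11 j12 j21 j22 (a - fs) (b - me) < Dv*m0*m0).
  { intros m0 a b Hm0 Hd. rewrite Hdist in Hd.
    set (S := (a-fs)*(a-fs) + (b-me)*(b-me)) in *.
    assert (HS0 : 0 <= S) by (unfold S; apply sumsq_nn).
    assert (Hk : 0 < Dv/Cv <= 1).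
    { split; [apply Rdiv_lt_0_compat; lra|].
      apply (Rmult_le_reg_r Cv); [lra|]. unfold Rdiv. rewrite Rmult_assoc, Rinv_l, Rmult_1_r by lra. lra. }
    set (k := Dv/Cv) in *.
    pose proof (sqrt_lt_sq S _ HS0 Hd) as HS.
    assert (Cv*(k*m0/2*(k*m0/2)) = Dv*k*m0*m0/4) by (unfold k; field; lra).
    pose proof (HVup (a-fs) (b-me)). fold S in H0.
    assert (Cv*S <= Cv*(k*m0/2*(k*m0/2))) by (apply Rmult_le_compat_l; lra).
    assert (Dv*k*m0*m0 <= Dv*m0*m0).
    { assert (0 < Dv*m0*m0) by (apply Rmult_lt_0_compat; [apply Rmult_lt_0_compat|]; lra). nra. }
    nra. }
  split.
  -
    intros eps Heps.
    set (m0 := Rmin rho eps).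
    assert (Hm0 : 0 < m0) by (apply Rmin_glb_lt; lra).
    assert (Hm0r : m0 <= rho) by apply Rmin_l.
    assert (Hm0e : m0 <= eps) by apply Rmin_r.
    exists ((Dv/Cv)*m0/2). split.
    { assert (0 < Dv/Cv) by (apply Rdiv_lt_0_compat; lra). apply Rdiv_lt_0_compat; [apply Rmult_lt_0_compat|]; lra. }
    intros T f m HT [Hder [Hrf Hrm]] Hd t Ht HtT.
    pose proof (INIT m0 (f 0) (m 0) Hm0 Hd) as HV0.
    assert (Hbar := barrier (fun t => Vq j11 j12 j21 j22 (f t - fs) (m t - me))
       (fun t => Vd j11 j12 j21 j22 (f t - fs) (m t - me) (Ff r alpha h s (f t) (m t)) (Fm r alpha h s (f t) (m t)))
       T (Dv*m0*m0)).
    assert (Hmm : Dv*m0*m0 <= Dv*rho*rho).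
    { assert (m0*m0 <= rho*rho) by nra. nra. }
    assert (Hbt := Hbar
      ltac:(intros u Hu HuT; destruct (Hder u Hu HuT); apply sol_deriv; assumption)
      ltac:(intros u Hu HuT HVu;
            pose proof (PW (f u) (m u) ltac:(lra));
            assert (0 <= (f u - fs)*(f u - fs) + (m u - me)*(m u - me)) by apply sumsq_nn; nra)
      (sol_rc f m fs me j11 j12 j21 j22 Hrf Hrm) HV0 t Ht HtT).
    simpl in Hbt.
    rewrite Hdist. apply sq_lt_sqrt; [apply sumsq_nn|lra|].
    pose proof (HVlo (f t - fs) (m t - me)).
    apply Rmult_lt_reg_l with Dv; [exact HD|].
    assert (Dv*m0*m0 <= Dv*eps*eps).
    { assert (m0*m0 <= eps*eps) by nra. nra. }
    nra.
  -
    exists ((Dv/Cv)*rho/2). split.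
    { assert (0 < Dv/Cv) by (apply Rdiv_lt_0_compat; lra). apply Rdiv_lt_0_compat; [apply Rmult_lt_0_compat|]; lra. }
    intros f m [Hder [Hrf Hrm]] Hd.
    pose proof (INIT rho (f 0) (m 0) (proj1 Hrho) Hd) as HV0.
    set (V := fun t => Vq j11 j12 j21 j22 (f t - fs) (m t - me)).
    set (D := fun t => Vd j11 j12 j21 j22 (f t - fs) (m t - me) (Ff r alpha h s (f t) (m t)) (Fm r alpha h s (f t) (m t))).
    assert (HdV : forall u, 0 < u -> is_derive V u (D u)).
    { intros u Hu. destruct (Hder u Hu I). apply sol_deriv; assumption. }
    assert (HrV : RC V) by (apply sol_rc; assumption).
    assert (Hsmall : forall u, 0 <= u -> V u <= V 0).
    { intros u Hu.
      apply (barrier V D p_infty (Dv*rho*rho)); [ | | exact HrV | exact HV0 | exact Hu | exact I].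
      - intros w Hw _. apply HdV; exact Hw.
      - intros w Hw _ HVw. pose proof (PW (f w) (m w) HVw).
        assert (0 <= (f w - fs)*(f w - fs) + (m w - me)*(m w - me)) by apply sumsq_nn. unfold D. nra. }
    set (c := c0/Cv).
    assert (Hcp : 0 < c) by (apply Rdiv_lt_0_compat; lra).
    assert (HVnn : forall u, 0 <= V u).
    { intros u. pose proof (HVlo (f u - fs) (m u - me)). unfold V.
      assert (0 <= (f u - fs)*(f u - fs) + (m u - me)*(m u - me)) by apply sumsq_nn. nra. }
    assert (Hdec : forall u, 0 < u -> D u <= - c * V u).
    { intros u Hu.
      assert (HV0' : V 0 < Dv*rho*rho) by exact HV0.
      assert (HVu : V u < Dv*rho*rho) by (pose proof (Hsmall u ltac:(lra)); lra).
      pose proof (PW (f u) (m u) HVu).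
      pose proof (HVup (f u - fs) (m u - me)). fold V in H0. fold (V u) in H0.
      set (S := (f u - fs)*(f u - fs) + (m u - me)*(m u - me)) in *.
      assert (V u <= Cv*S) by exact H0.
      assert (c*V u <= c0*S).
      { unfold c. apply Rmult_le_reg_l with Cv; [lra|].
        replace (Cv*(c0/Cv*V u)) with (c0*V u) by (field; lra). nra. }
      unfold D. fold S. nra. }
    set (W := fun t => V t * (1 + c*t)).
    assert (HW : forall u, 0 <= u -> W u <= W 0).
    { intros u0 Hu0.
      apply (mono_lemma W (fun u => D u * (1 + c*u) + V u * (0 + c*1)) p_infty); [ | | | exact Hu0 | exact I].
      - intros u Hu _. unfold W.
        apply (d_mult V (fun t => 1 + c*t) u (D u) (0 + c*1) (HdV u Hu)).
        apply (d_plus (fun _ => 1) (fun t => c*t) u 0 (c*1) (d_const 1 u)).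
        apply (d_eq _ _ _ _ (d_mult (fun _ => c) (fun t => t) u 0 1 (d_const c u) (d_id u))). match goal with |- ?a = ?b => change (@eq R a b) end; ring.
      - intros u Hu _. pose proof (Hdec u Hu). pose proof (HVnn u).
        assert (0 <= c*u) by nra.
        assert (D u * (1+c*u) <= -c*V u*(1+c*u)) by (apply Rmult_le_compat_r; lra).
        assert (0 <= c*u*(c*V u)) by (apply Rmult_le_pos; [lra|apply Rmult_le_pos; lra]).
        assert (-c*V u*(1+c*u) + V u*(0+c*1) = -(c*u*(c*V u))) by ring.
        lra.
      - unfold W. apply rc_mult; [exact HrV|]. apply rc_plus; [apply rc_const|].
        apply rc_mult; [apply rc_const|apply rc_id]. }
    assert (Hfin : forall u, 0 <= u -> Dv*((f u - fs)*(f u - fs) + (m u - me)*(m u - me))*(1+c*u) <= V 0).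
    { intros u Hu. pose proof (HW u Hu). unfold W in H. rewrite Rmult_0_r, Rplus_0_r, Rmult_1_r in H.
      pose proof (HVlo (f u - fs) (m u - me)). fold V in H0. fold (V u) in H0.
      assert (0 <= c*u) by nra.
      assert (Dv*((f u - fs)*(f u - fs) + (m u - me)*(m u - me))*(1+c*u) <= V u*(1+c*u))
        by (apply Rmult_le_compat_r; lra).
      lra. }
    assert (HV0nn := HVnn 0).
    assert (CONV : forall eps, 0 < eps -> exists Mb, forall u, Mb < u ->
       (f u - fs)*(f u - fs) + (m u - me)*(m u - me) < eps*eps).
    { intros eps Heps. exists (V 0/(Dv*c*(eps*eps))). intros u Hu.
      assert (Hden : 0 < Dv*c*(eps*eps)) by (apply Rmult_lt_0_compat; [apply Rmult_lt_0_compat|]; nra).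
      assert (0 <= V 0/(Dv*c*(eps*eps))) by (apply Rdiv_le_0_compat; lra).
      assert (Hu' : V 0 < Dv*c*(eps*eps)*u).
      { apply Rmult_lt_compat_l with (r := Dv*c*(eps*eps)) in Hu; [|lra].
        field_simplify in Hu; [|lra]. lra. }
      pose proof (Hfin u ltac:(lra)).
      set (S := (f u - fs)*(f u - fs) + (m u - me)*(m u - me)) in *.
      destruct (Rlt_le_dec S (eps*eps)) as [ok|bad]; [exact ok|exfalso].
      assert (Dv*(eps*eps)*(1+c*u) <= Dv*S*(1+c*u)).
      { apply Rmult_le_compat_r; [nra|]. apply Rmult_le_compat_l; lra. }
      assert (Dv*(eps*eps)*(1+c*u) = Dv*(eps*eps) + Dv*c*(eps*eps)*u) by ring.
      assert (0 < Dv*(eps*eps)) by (apply Rmult_lt_0_compat; nra).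
      lra. }
    split; apply is_lim_spec; intros eps; destruct (CONV eps (cond_pos eps)) as [Mb HMb];
      exists Mb; intros u Hu; specialize (HMb u Hu); apply abs_lt_of_sq; try apply cond_pos;
      pose proof (Rle_0_sqr (f u - fs)); pose proof (Rle_0_sqr (m u - me)); unfold Rsqr in *; lra.
Qed.
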